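(* Let $N\ge1$, $n=\sum_{\nu=1}^N n_\nu$, $m\ge1$. For $\nu=1,\dots,N$ let $Q_\nu\in\mathbb{R}^{n_\nu\times n_\nu}$ be symmetric positive definite, $c_\nu\in\mathbb{R}^{n_\nu}$, and $X_\nu\subseteq\mathbb{R}^{n_\nu}$ nonempty such that $X=X_1\times\dots\times X_N$ is convex and closed. Let $a\in\mathbb{R}^m$, $a\ge0$, $Q_y\in\mathbb{R}^{m\times m}$ positive definite diagonal, $B,L\in\mathbb{R}^{n\times m}$. Let $\varepsilon>0$ and let $\tilde\phi_\varepsilon:\mathbb{R}\to\mathbb{R}$ be convex and smooth (applied componentwise to vectors). Consider the Nash equilibrium problem NEP($\varepsilon$) in which player $\nu$ solves $$\min_{x_\nu\in X_\nu}\ \theta^\varepsilon_\nu(x_\nu,x_{-\nu})=\tfrac12 x_\nu^\top Q_\nu x_\nu+c_\nu^\top x_\nu+\tfrac12\sum_{i=1}^m a_i\Big[(L^\top+Q_y^{-1}B^\top)x+\tilde\phi_\varepsilon\big((L^\top-Q_y^{-1}B^\top)x\big)\Big]_i.$$ Then NEP($\varepsilon$) has a unique Nash equilibrium, i.e. a unique $x^*\in X$ with $\theta^\varepsilon_\nu(x^*_\nu,x^*_{-\nu})\le\theta^\varepsilon_\nu(x_\nu,x^*_{-\nu})$ for all $x_\nu\in X_\nu$ and all $\nu$.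
   Context: Notation: $x=(x_1,\dots,x_N)$ with $x_\nu\in\mathbb{R}^{n_\nu}$, $x_{-\nu}$ = all components other than $x_\nu$. NEP($\varepsilon$) arises from a multi-leader-follower game by replacing the follower's best response $\max\{Q_y^{-1}B^\top x,L^\top x\}$ with its smoothing $\tfrac12[(L^\top+Q_y^{-1}B^\top)x+\tilde\phi_\varepsilon((L^\top-Q_y^{-1}B^\top)x)]$, obtained from a smooth NCP function $\phi_\varepsilon(\alpha,\beta)=\alpha+\beta-\tilde\phi_\varepsilon(\alpha-\beta)$. *)

(* Defs.v *)
From HB Require Import structures.
From mathcomp Require Import all_boot all_order all_algebra.
From mathcomp Require Import all_classical all_reals all_analysis.
Set Implicit Arguments. Unset Strict Implicit. Unset Printing Implicit Defensive.
Import Order.TTheory GRing.Theory Num.Theory.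
Import numFieldTopology.Exports.
Local Open Scope ring_scope.
Local Open Scope classical_set_scope.

Section Defs.
Variable R : realType.

Definition sym_mx (k : nat) (Q : 'M[R]_k) : Prop := Q^T = Q.
Definition posdef_mx (k : nat) (Q : 'M[R]_k) : Prop :=
  forall v : 'cV[R]_k, v != 0 -> 0 < (v^T *m Q *m v) 0 0.

Definition convex_set_mx (k : nat) (S : set 'cV[R]_k) : Prop :=
  forall u v, S u -> S v -> forall t : R, 0 <= t <= 1 ->
    S (t *: u + (1 - t) *: v).

Definition convex_fun (f : R -> R) : Prop :=
  forall x y t : R, 0 <= t <= 1 -> f (t * x + (1 - t) * y) <= t * f x + (1 - t) * f y.

Definition smooth_fun (f : R -> R) : Prop :=
  forall (k : nat) (x : R), derivable (derive1n k f) x 1.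

Definition stack (N : nat) (nn : 'I_N -> nat) (xs : forall nu, 'cV[R]_(nn nu))
  : 'cV[R]_(\sum_(nu < N) nn nu) := \mxcol_(nu < N) xs nu.

Definition prod_set (N : nat) (nn : 'I_N -> nat) (X : forall nu, set 'cV[R]_(nn nu))
  : set 'cV[R]_(\sum_(nu < N) nn nu) :=
  [set v | exists xs : forall nu, 'cV[R]_(nn nu), (forall nu, X nu (xs nu)) /\ v = stack xs].

Definition theta (N m : nat) (nn : 'I_N -> nat)
  (Q : forall nu, 'M[R]_(nn nu)) (c : forall nu, 'cV[R]_(nn nu))
  (a : 'cV[R]_m) (Qy : 'M[R]_m) (B L : 'M[R]_(\sum_(nu < N) nn nu, m))
  (phi : R -> R) (nu : 'I_N) (xs : forall j, 'cV[R]_(nn j)) : R :=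
  let x := stack xs in
  let w := (L^T + invmx Qy *m B^T) *m x + map_mx phi ((L^T - invmx Qy *m B^T) *m x) in
  2^-1 * ((xs nu)^T *m Q nu *m xs nu) 0 0 + ((c nu)^T *m xs nu) 0 0
  + 2^-1 * \sum_(i < m) a i 0 * w i 0.

Definition nash_eq (N m : nat) (nn : 'I_N -> nat)
  (Q : forall nu, 'M[R]_(nn nu)) (c : forall nu, 'cV[R]_(nn nu))
  (X : forall nu, set 'cV[R]_(nn nu))
  (a : 'cV[R]_m) (Qy : 'M[R]_m) (B L : 'M[R]_(\sum_(nu < N) nn nu, m))
  (phi : R -> R) (xs : forall j, 'cV[R]_(nn j)) : Prop :=
  (forall nu, X nu (xs nu)) /\
  forall (nu : 'I_N) (y : 'cV[R]_(nn nu)), X nu y ->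
    theta Q c a Qy B L phi nu xs <= theta Q c a Qy B L phi nu (@dfwith _ (fun j => 'cV[R]_(nn j)) xs nu y).

End Defs.

(* Main.v *)
Require Import Defs.
From HB Require Import structures.
From mathcomp Require Import all_boot all_order all_algebra.
From mathcomp Require Import all_classical all_reals all_analysis.
From mathcomp Require Import ring lra.
Import Order.TTheory GRing.Theory Num.Theory.
Import numFieldTopology.Exports.
Set Implicit Arguments. Unset Strict Implicit. Unset Printing Implicit Defensive.
Local Open Scope ring_scope.
Local Open Scope classical_set_scope.
Section Cont.
Context {R : realType}.

Lemma cont_sum (T : topologicalType) (I : finType) (F : I -> T -> R) x :
  (forall i, {for x, continuous (F i)}) ->
  {for x, continuous (fun y => \sum_i F i y)}.
Proof.
move=> H.
suff: forall r, (fun y => \sum_(i <- r) F i y) @ x --> \sum_(i <- r) F i x by apply.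
elim => [|i r IH].
  have -> : (fun y => \sum_(i <- [::]) F i y) = fun=> 0.
    by apply: funext => y; rewrite big_nil.
  rewrite big_nil; exact: cvg_cst.
have -> : (fun y => \sum_(j <- i :: r) F j y) = F i + (fun y => \sum_(j <- r) F j y).
  by apply: funext => y; rewrite big_cons.
rewrite big_cons.
exact: (@continuousD _ _ _ (F i) (fun y => \sum_(j <- r) F j y)).
Qed.

Lemma contD' (T : topologicalType) (f g : T -> R) x :
  {for x, continuous f} -> {for x, continuous g} -> {for x, continuous (fun y => f y + g y)}.
Proof. exact: continuousD. Qed.
Lemma contM' (T : topologicalType) (f g : T -> R) x :
  {for x, continuous f} -> {for x, continuous g} -> {for x, continuous (fun y => f y * g y)}.
Proof. exact: continuousM. Qed.
Lemma contcomp' (T : topologicalType) (f : T -> R) (g : R -> R) x :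
  {for x, continuous f} -> {for f x, continuous g} -> {for x, continuous (fun y => g (f y))}.
Proof. exact: continuous_comp. Qed.
Lemma contC' (T : topologicalType) (k : R) (x : T) : {for x, continuous (fun _ : T => k)}.
Proof. exact: cvg_cst. Qed.

Definition EC (T : topologicalType) p q (f : T -> 'M[R]_(p, q)) :=
  forall i j, continuous (fun x => f x i j).

Lemma EC_cst (T : topologicalType) p q (A : 'M[R]_(p, q)) : EC (fun _ : T => A).
Proof. by move=> i j x; exact: cvg_cst. Qed.

Lemma EC_id p q : EC (fun x : 'M[R]_(p, q) => x).
Proof. by move=> i j; exact: coord_continuous. Qed.

Lemma EC_add (T : topologicalType) p q (f g : T -> 'M[R]_(p, q)) :
  EC f -> EC g -> EC (fun x => f x + g x).
Proof.
move=> hf hg i j.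
have -> : (fun x => (f x + g x) i j) = (fun x => f x i j) + (fun x => g x i j).
  by apply: funext => x; rewrite !mxE.
by move=> x; apply: continuousD; [exact: hf | exact: hg].
Qed.

Lemma EC_tr (T : topologicalType) p q (f : T -> 'M[R]_(p, q)) :
  EC f -> EC (fun x => (f x)^T).
Proof.
move=> hf i j.
have -> : (fun x => (f x)^T i j) = (fun x => f x j i).
  by apply: funext => x; rewrite !mxE.
exact: hf.
Qed.

Lemma EC_mul (T : topologicalType) p q r (f : T -> 'M[R]_(p, q)) (g : T -> 'M[R]_(q, r)) :
  EC f -> EC g -> EC (fun x => f x *m g x).
Proof.
move=> hf hg i j.
have -> : (fun x => (f x *m g x) i j) = (fun x => \sum_k f x i k * g x k j).
  by apply: funext => x; rewrite !mxE.
move=> x; apply: cont_sum => k.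
by apply: (@continuousM _ _ (fun x => f x i k) (fun x => g x k j)); [exact: hf|exact: hg].
Qed.

Lemma EC_submxcol p (p_ : 'I_p -> nat) q (nu : 'I_p) :
  EC (fun x : 'M[R]_(\sum_i p_ i, q) => submxcol x nu).
Proof.
move=> i j.
have -> : (fun x : 'M[R]_(\sum_i p_ i, q) => submxcol x nu i j) = (fun x => x (tagnat.Rank nu i) j).
  by apply: funext => x; rewrite /submxcol !mxE.
exact: coord_continuous.
Qed.

Lemma trmx_continuous k : continuous (fun x : 'rV[R]_k => x^T).
Proof.
move=> M s /= /nbhs_ballP [e e0 es]; apply/nbhs_ballP; exists e => //= N [e0' MN].
apply: es; split => // i j; rewrite !mxE; exact: MN.
Qed.

Lemma entry_le_norm p q (x : 'M[R]_(p, q)) i j : `|x i j| <= `|x|.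
Proof.
have /mapP[ij Hj ->] : `|x i j| \in [seq `|x ij.1 ij.2| | ij : 'I_p * 'I_q].
  by apply/mapP; exists (i, j) => //=; rewrite mem_enum.
by rewrite [leRHS]/Num.norm /= mx_normrE; apply/bigmax_geP; right => /=; exists ij.
Qed.

Lemma compact_cV k (A : set 'cV[R]_k) r :
  closed A -> A `<=` [set x | `|x| <= r] -> compact A.
Proof.
move=> Acl Ab.
have Bc := @rV_compact R k (fun=> `[(- r), r]%classic) (fun _ => @segment_compact _ _ _).
have Bc' : compact ((fun v : 'rV[R]_k => v^T) @`
     [set v : 'rV[R]_k | forall i, `[(- r), r]%classic (v ord0 i)]).
  apply: continuous_compact => //; apply: continuous_subspaceT.
  exact: trmx_continuous.
apply: (subclosed_compact Acl Bc') => x /Ab xr.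
exists x^T; last by rewrite trmxK.
move=> i; rewrite /= in_itv /= mxE -ler_norml.
exact: le_trans (entry_le_norm _ _ _) xr.
Qed.

Lemma nonneg_at0 (G : R -> R) :
  {for 0, continuous G} -> (forall t, 0 < t <= 1 -> 0 <= G t) -> 0 <= G 0.
Proof.
move=> cG H.
have hr : G t @[t --> 0^'+] --> G 0 by apply: cvg_at_right_filter; exact: cG.
apply: (cvgr_to_ge hr); near=> t; apply: H; apply/andP; split.
  by near: t; exists 1 => [|y _ /=]; first exact: ltr01.
near: t; exists 1 => [|h]; first exact: ltr01. rewrite /= distrC subr0 => /(le_lt_trans (ler_norm _)) /ltW //.
Unshelve. all: by end_near.
Qed.

End Cont.

Ltac getpt := lazymatch goal with
  | |- @prop_for _ ?x _ _ => constr:(x)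
  | |- @continuous_at _ _ ?x _ => constr:(x)
  | |- cvg_to (fmap _ (nbhs ?x)) _ => constr:(x)
  end.
Ltac cD := let x := getpt in apply: (@contD' _ _ _ _ x).
Ltac cM := let x := getpt in apply: (@contM' _ _ _ _ x).
Ltac cC := let x := getpt in exact: (@contC' _ _ _ x).

Lemma tangent_le (R : realType) (f : R -> R) : convex_fun f ->
  (forall x, derivable f x 1) -> forall u v, f u + derive1 f u * (v - u) <= f v.
Proof.
move=> cf df u v; rewrite derive1E.
have key : forall s, 0 < s / (v - u) < 1 -> f (s + u) - f u <= s / (v - u) * (f v - f u).
  move=> s /andP[t0 t1].
  have hu : v - u != 0 by apply: contraTneq t0 => ->; rewrite invr0 mulr0 ltxx.
  have := cf v u (s / (v - u)); rewrite (ltW t0) (ltW t1) => /(_ isT).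
  have -> : s / (v - u) * v + (1 - s / (v - u)) * u = s + u.
    by field.
  lra.
case: (ltgtP u v) => [uv|vu|->]; last by rewrite subrr mulr0 addr0.
- rewrite -lerBrDl -ler_pdivlMr ?subr_gt0 //.
  rewrite ['D_1 f u]cvg_at_rightE; last exact: df.
  apply: limr_le.
    have dfc := df u.
    rewrite -(cvg_at_rightE (fun h : R => h^-1 *: ((f \o shift u) _ - f u))) //.
    apply: cvg_trans dfc; apply: cvg_app.
    move=> A [e egt0 Ae]; exists e => // x xe xgt0; apply: Ae => //.
    exact/lt0r_neq0.
  near=> s.
  have s0 : 0 < s by near: s; exists 1 => /=.
  have s1 : s < v - u.
    near: s; exists (v - u); first by rewrite /= subr_gt0.
    move=> h; rewrite /= distrC subr0 => /(le_lt_trans (ler_norm _)) //.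
  change (s^-1 * (f (s * 1 + u) - f u) <= (f v - f u) / (v - u)); rewrite mulr1.
  have := key s; rewrite divr_gt0 ?subr_gt0 // ltr_pdivrMr ?subr_gt0 // mul1r s1 => /(_ isT) H.
  rewrite -(ler_pM2l s0) mulrA mulfV ?gt_eqF // mul1r; apply: (le_trans H).
  by rewrite mulrA mulrAC.
- rewrite -lerBrDl.
  have vu0 : v - u < 0 by rewrite subr_lt0.
  suff H : (f v - f u) / (v - u) <= 'D_1 f u.
    by rewrite -(ler_nM2r vu0) divfK ?ltr0_neq0 in H.
  rewrite ['D_1 f u]cvg_at_leftE; last exact: df.
  apply: limr_ge.
    have dfc := df u.
    rewrite -(cvg_at_leftE (fun h : R => h^-1 *: ((f \o shift u) _ - f u))) //.
    apply: cvg_trans dfc; apply: cvg_app.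
    move=> A [e egt0 Ae]; exists e => // x xe xgt0; apply: Ae => //.
    exact/ltr0_neq0.
  near=> s.
  have s0 : s < 0 by near: s; exists 1 => /=.
  have s1 : v - u < s.
    near: s; exists (u - v); first by rewrite /= subr_gt0.
    move=> h; rewrite /= distrC subr0 => /ltr_normlP [] *; lra.
  change ((f v - f u) / (v - u) <= s^-1 * (f (s * 1 + u) - f u)); rewrite mulr1.
  have t0 : 0 < s / (v - u) by rewrite nmulr_rgt0 // invr_lt0.
  have t1 : s / (v - u) < 1 by rewrite ltr_ndivrMr // mul1r.
  have := key s; rewrite t0 t1 => /(_ isT) H.
  rewrite -(ler_nM2l s0) mulrA mulfV ?lt_eqF // mul1r; apply: (le_trans H).
  by rewrite mulrA mulrAC.
Unshelve. all: by end_near.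
Qed.
Unset Implicit Arguments.
Section Main.
Variables (R : realType) (N m : nat) (nn : 'I_N -> nat)
  (Q : forall nu, 'M[R]_(nn nu)) (c : forall nu, 'cV[R]_(nn nu))
  (XX : forall nu, set 'cV[R]_(nn nu))
  (a : 'cV[R]_m) (Qy : 'M[R]_m) (B L : 'M[R]_(\sum_(nu < N) nn nu, m))
  (phi : R -> R).

Local Notation prof := (forall j, 'cV[R]_(nn j)).
Local Notation n := (\sum_(nu < N) nn nu)%N.
Local Notation TH := (theta Q c a Qy B L phi).
Local Notation NE := (nash_eq Q c XX a Qy B L phi).
Local Notation dfw := (@dfwith _ (fun j => 'cV[R]_(nn j))).

Lemma dfw_in (xs : prof) nu y : dfw xs nu y nu = y.
Proof. exact: dfwith_in. Qed.
Lemma dfw_out (xs : prof) nu y j : j != nu -> dfw xs nu y j = xs j.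
Proof. by move=> h; apply: dfwith_out; rewrite eq_sym. Qed.

Definition Mm : 'M[R]_(m, n) := L^T + invmx Qy *m B^T.
Definition Km : 'M[R]_(m, n) := L^T - invmx Qy *m B^T.
Definition Sfun (x : 'cV[R]_n) : R :=
  2^-1 * \sum_(i < m) a i 0 * ((Mm *m x) i 0 + phi ((Km *m x) i 0)).
Definition quad nu (z : 'cV[R]_(nn nu)) : R :=
  2^-1 * (z^T *m Q nu *m z) 0 0 + ((c nu)^T *m z) 0 0.
Definition Fx (x : 'cV[R]_n) : R :=
  \sum_nu quad _ (@submxcol _ _ nn _ x nu) + Sfun x.

Lemma thetaE nu (xs : prof) : TH nu xs = quad _ (xs nu) + Sfun (stack xs).
Proof.
rewrite /theta /quad /Sfun /Mm /Km; congr (_ + _ * _).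
by apply: eq_bigr => i _; rewrite [in LHS]mxE [X in _ + X]mxE.
Qed.

Lemma submxcol_stack (xs : prof) nu : @submxcol _ _ nn _ (stack xs) nu = xs nu.
Proof. by rewrite /stack mxcolK. Qed.

Lemma stack_submx x : @stack R N nn (fun nu => @submxcol _ _ nn _ x nu) = x.
Proof. by rewrite /stack submxcolK. Qed.

Lemma FxE (xs : prof) : Fx (stack xs) = \sum_nu quad _ (xs nu) + Sfun (stack xs).
Proof. by rewrite /Fx; congr (_ + _); apply: eq_bigr => nu _; rewrite submxcol_stack. Qed.

Lemma stack_block k (A : 'M[R]_(k, n)) (xs : prof) :
  A *m stack xs = \sum_j @submxrow _ _ nn _ A j *m xs j.
Proof. by rewrite /stack -{1}(submxrowK A) mul_mxrow_mxcol. Qed.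

Lemma stack_dfwith k (A : 'M[R]_(k, n)) (xs : prof) nu y :
  A *m stack (dfw xs nu y) = A *m stack xs + @submxrow _ _ nn _ A nu *m (y - xs nu).
Proof.
rewrite !stack_block (bigD1 nu) //= [in RHS](bigD1 nu) //= dfw_in.
rewrite mulmxBr.
have -> : \sum_(j < N | j != nu) submxrow A j *m dfw xs nu y j =
          \sum_(j < N | j != nu) submxrow A j *m xs j.
  by apply: eq_bigr => j jnu; rewrite dfw_out.
rewrite addrAC -addrA; set p := _ *m y; set q := _ *m xs nu; set s := \sum_(j < N | _) _.
by rewrite addrA (addrC q) subrK.
Qed.

Lemma theta_diff nu (xs : prof) y :
  TH nu (dfw xs nu y) - TH nu xs = Fx (stack (dfw xs nu y)) - Fx (stack xs).
Proof.
rewrite !thetaE !FxE dfw_in (bigD1 nu) //= [\sum_nu _](bigD1 nu) //= dfw_in.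
have -> : \sum_(j < N | j != nu) quad _ (dfw xs nu y j) = \sum_(j < N | j != nu) quad _ (xs j).
  by apply: eq_bigr => j jnu; rewrite dfw_out.
set s := \sum_(j < N | _) _. 
ring.
Qed.

Lemma min_is_nash (xs : prof) : (forall nu, XX nu (xs nu)) ->
  (forall x, prod_set XX x -> Fx (stack xs) <= Fx x) -> NE xs.
Proof.
move=> Xxs Hmin; split => // nu y Xy.
rewrite -subr_ge0 theta_diff subr_ge0; apply: Hmin.
exists (dfw xs nu y); split => // j.
by case: (dfwithP xs y j) => // j' _; exact: Xxs.
Qed.


Definition q2 (x : 'cV[R]_n) : R :=
  \sum_nu ((@submxcol _ _ nn _ x nu)^T *m Q nu *m @submxcol _ _ nn _ x nu) 0 0.
Definition lin (x : 'cV[R]_n) : R :=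
  \sum_nu ((c nu)^T *m @submxcol _ _ nn _ x nu) 0 0 +
  2^-1 * \sum_(i < m) a i 0 * ((Mm *m x) i 0 + derive1 phi 0 * (Km *m x) i 0).
Definition C0 : R := 2^-1 * \sum_(i < m) a i 0 * phi 0.

Lemma Fx_lb (ha : forall i, 0 <= a i 0) (cvx : convex_fun phi)
  (der : forall x, derivable phi x 1) x :
  2^-1 * q2 x + lin x + C0 <= Fx x.
Proof.
have E : Fx x = 2^-1 * q2 x + \sum_nu ((c nu)^T *m @submxcol _ _ nn _ x nu) 0 0 +
   2^-1 * \sum_(i < m) a i 0 * ((Mm *m x) i 0 + phi ((Km *m x) i 0)).
  by rewrite /Fx /quad /q2 big_split /= mulr_sumr.
have key : \sum_(i < m) a i 0 * ((Mm *m x) i 0 + derive1 phi 0 * (Km *m x) i 0)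
   + \sum_(i < m) a i 0 * phi 0 <=
   \sum_(i < m) a i 0 * ((Mm *m x) i 0 + phi ((Km *m x) i 0)).
  rewrite -big_split /=; apply: ler_sum => i _.
  rewrite -mulrDr; apply: ler_wpM2l => //.
  have := tangent_le cvx der 0 ((Km *m x) i 0); rewrite subr0; lra.
rewrite E /lin /C0; lra.
Qed.

Lemma submxcolZ k (x : 'cV[R]_n) nu :
  @submxcol _ _ nn _ (k *: x) nu = k *: @submxcol _ _ nn _ x nu.
Proof. by apply/matrixP => i j; rewrite !mxE. Qed.

Lemma q2Z k x : q2 (k *: x) = k ^+ 2 * q2 x.
Proof.
rewrite /q2 mulr_sumr; apply: eq_bigr => nu _.
rewrite submxcolZ !linearZ /= -!scalemxAl scalerA [LHS]mxE.
by rewrite expr2.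
Qed.

Lemma linZ k x : lin (k *: x) = k * lin x.
Proof.
rewrite /lin mulrDr mulr_sumr; congr (_ + _).
  by apply: eq_bigr => nu _; rewrite submxcolZ -scalemxAr [LHS]mxE.
rewrite mulrCA; congr (_ * _); rewrite mulr_sumr; apply: eq_bigr => i _.
rewrite -!scalemxAr [(k *: (Mm *m x)) i 0]mxE [(k *: (Km *m x)) i 0]mxE; ring.
Qed.

Lemma q2_ge0 (hQ : forall nu, posdef_mx (Q nu)) x : 0 <= q2 x.
Proof.
apply: sumr_ge0 => nu _; set z := submxcol x nu.
have [->|nz] := eqVneq z 0.
  by rewrite mulmx0 mxE.
exact/ltW/hQ.
Qed.

Lemma q2_gt0 (hQ : forall nu, posdef_mx (Q nu)) x : x != 0 -> 0 < q2 x.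
Proof.
move=> xn0.
have [nu hnu] : exists nu, @submxcol _ _ nn _ x nu != 0.
  case: (pselect (exists nu, @submxcol _ _ nn _ x nu != 0)) => // hno.
  have hall nu : @submxcol _ _ nn _ x nu = 0.
    by case: (eqVneq (@submxcol _ _ nn _ x nu) 0) => // h; exfalso; apply: hno; exists nu.
  exfalso; move/eqP: xn0; apply.
  rewrite -(stack_submx x) /stack; apply/matrixP => i j.
  by rewrite /mxcol mxE hall !mxE.
rewrite /q2 (bigD1 nu) //=.
have h1 := hQ nu _ hnu.
have h2 : 0 <= \sum_(j < N | j != nu) ((@submxcol _ _ nn _ x j)^T *m Q j *m @submxcol _ _ nn _ x j) 0 0.
  apply: sumr_ge0 => j _; set z := submxcol x j.
  have [->|nz] := eqVneq z 0; first by rewrite mulmx0 mxE.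
  exact/ltW/hQ.
lra.
Qed.

Lemma qf_cont nu : continuous (fun x : 'cV[R]_n =>
   ((@submxcol _ _ nn _ x nu)^T *m Q nu *m @submxcol _ _ nn _ x nu) 0 0).
Proof.
have h1 := @EC_submxcol R N nn 1 nu.
have h2 := EC_tr h1.
have h3 := EC_mul h2 (@EC_cst R _ _ _ (Q nu)).
have h4 := EC_mul h3 h1.
exact: h4.
Qed.

Lemma cz_cont nu : continuous (fun x : 'cV[R]_n => ((c nu)^T *m @submxcol _ _ nn _ x nu) 0 0).
Proof.
have h1 := @EC_submxcol R N nn 1 nu.
exact: (EC_mul (@EC_cst R _ _ _ (c nu)^T) h1).
Qed.

Lemma q2_cont : continuous q2.
Proof. by move=> x; apply: cont_sum => nu; exact: qf_cont. Qed.

Lemma Mx_cont k (A : 'M[R]_(k, n)) i : continuous (fun x : 'cV[R]_n => (A *m x) i 0).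
Proof. exact: (EC_mul (@EC_cst R _ _ _ A) (@EC_id R n 1)). Qed.

Lemma lin_cont : continuous lin.
Proof.
move=> x; rewrite /lin; cD.
  by apply: cont_sum => nu; exact: cz_cont.
cM; first cC.
apply: cont_sum => i; cM; first cC.
cD; first exact: Mx_cont.
cM; first cC.
exact: Mx_cont.
Qed.

Lemma Fx_cont (phic : continuous phi) : continuous Fx.
Proof.
move=> x; rewrite /Fx; cD.
  apply: cont_sum => nu; rewrite /quad.
  cD.
    cM; first cC.
    exact: qf_cont.
  exact: cz_cont.
rewrite /Sfun; cM; first cC.
apply: cont_sum => i; cM; first cC.
cD; first exact: Mx_cont.
apply: (@continuous_comp _ _ _ (fun x : 'cV[R]_n => (Km *m x) i 0) phi).
  exact: Mx_cont.
exact: phic.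
Qed.

Lemma closed_normle k r : closed [set x : 'cV[R]_k | `|x| <= r].
Proof.
apply: (@preimage_closed _ _ (fun x : 'cV[R]_k => `|x|) [set y | y <= r]).
  by move=> y _; exact: norm_continuous.
exact: closed_le.
Qed.

Lemma closed_norm1 k : closed [set x : 'cV[R]_k | `|x| = 1].
Proof.
have -> : [set x : 'cV[R]_k | `|x| = 1] =
    (fun x : 'cV[R]_k => `|x|) @^-1` ([set y | y <= 1] `&` [set y | 1 <= y]).
  apply/seteqP; split => x /=.
    by move=> ->; rewrite lexx.
  by case=> h1 h2; apply/eqP; rewrite eq_le h1 h2.
apply: preimage_closed.
  by move=> y _; exact: norm_continuous.
apply: closedI; [exact: closed_le | exact: closed_ge].
Qed.

Lemma coercive (hQ : forall nu, posdef_mx (Q nu)) (ha : forall i, 0 <= a i 0)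
  (cvx : convex_fun phi) (der : forall x, derivable phi x 1) (x0 : 'cV[R]_n) :
  exists r, forall x, r < `|x| -> Fx x0 < Fx x.
Proof.
case: (pselect (exists u : 'cV[R]_n, `|u| = 1)) => [[u0 hu0]|nU]; last first.
  exists 0 => x hx; exfalso; apply: nU; exists (`|x|^-1 *: x); apply: normrZV.
  by rewrite unitfE gt_eqF.
have U0 : [set u : 'cV[R]_n | `|u| = 1] !=set0 by exists u0.
have Uc : compact [set u : 'cV[R]_n | `|u| = 1].
  by apply: (compact_cV (closed_norm1 _)) => u /= ->.
have cq : {within [set u : 'cV[R]_n | `|u| = 1], continuous q2}.
  by apply: continuous_subspaceT; exact: q2_cont.
have [cmin cminU hmin] := compact_EVT_min U0 Uc cq.
have labs : continuous (fun u => `|lin u|).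
  by move=> u; apply: (continuous_comp (lin_cont u)); exact: norm_continuous.
have cl : {within [set u : 'cV[R]_n | `|u| = 1], continuous (fun u => `|lin u|)}.
  by apply: continuous_subspaceT; exact: labs.
have [cmax cmaxU hmax] := compact_EVT_max U0 Uc cl.
rewrite inE /= in cminU.
have cmin0 : cmin != 0 by apply/eqP => h; move: cminU; rewrite h normr0 => /eqP; rewrite eq_sym oner_eq0.
have mu0 := q2_gt0 hQ cmin cmin0.
set mu := q2 cmin in mu0 hmin.
set Ml := `|lin cmax| in hmax.
set K := Ml + `|C0| + `|Fx x0|.
have K0 : 0 <= K by rewrite /K /Ml; have := normr_ge0 (lin cmax); have := normr_ge0 C0; have := normr_ge0 (Fx x0); lra.
exists (2 * K / mu + 1) => x hx.
set s := `|x| in hx.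
have Kmu : 0 <= 2 * K / mu by rewrite divr_ge0 // ?mulr_ge0 // ltW.
have s1 : 1 < s by lra.
have s0 : 0 < s by lra.
set u := s^-1 *: x.
have uU : `|u| = 1 by apply: normrZV; rewrite unitfE gt_eqF.
have xE : x = s *: u by rewrite /u scalerA mulfV ?gt_eqF // scale1r.
have hq : mu <= q2 u by apply: hmin; rewrite inE.
have hl : `|lin u| <= Ml by apply: hmax; rewrite inE.
have q2x : q2 x = s^+2 * q2 u by rewrite {1}xE q2Z.
have lx : lin x = s * lin u by rewrite {1}xE linZ.
have lb := Fx_lb ha cvx der x.
have h1 : 2 * K < (s - 1) * mu.
  by rewrite -ltr_pdivrMr //; lra.
have hlu : - Ml <= lin u by move: hl; rewrite ler_norml => /andP[].
have e1 : s^+2 * mu <= s^+2 * q2 u by rewrite ler_wpM2l // sqr_ge0.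
have e2 : s * (- Ml) <= s * lin u by rewrite ler_wpM2l // ltW.
have e3 : s * (2 * K) < s * ((s - 1) * mu) by rewrite ltr_pM2l.
have e4 : `|C0| + `|Fx x0| <= s * (`|C0| + `|Fx x0|).
  by rewrite ler_peMl ?addr_ge0 // ltW.
have f1 : Fx x0 <= `|Fx x0| := ler_norm _.
have f2 : - `|C0| <= C0 by rewrite lerNl -normrN ler_norm.
rewrite q2x lx in lb.
rewrite /K in e3.
nra.
Qed.

Lemma phi_cont (der : forall x, derivable phi x 1) : continuous phi.
Proof. by move=> x; apply: differentiable_continuous; apply/derivable1_diffP. Qed.

Lemma exists_min (hQ : forall nu, posdef_mx (Q nu)) (ha : forall i, 0 <= a i 0)
  (cvx : convex_fun phi) (der : forall x, derivable phi x 1)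
  (hX : forall nu, XX nu !=set0) (Ccl : closed (prod_set XX)) :
  exists xs : prof, (forall nu, XX nu (xs nu)) /\
    forall x, prod_set XX x -> Fx (stack xs) <= Fx x.
Proof.
pose xs0 : prof := fun nu => sval (cid (hX nu)).
have Xxs0 : forall nu, XX nu (xs0 nu) := fun nu => svalP (cid (hX nu)).
set x0 := stack xs0.
have Cx0 : prod_set XX x0 by exists xs0.
have [r hr] := coercive hQ ha cvx der x0.
set r' := Num.max r `|x0|.
have Kne : (prod_set XX `&` [set x | `|x| <= r']) !=set0.
  by exists x0; split; [exact: Cx0 | rewrite /= /r' le_max lexx orbT].
have Kc : compact (prod_set XX `&` [set x | `|x| <= r']).
  by apply: (@compact_cV _ _ _ r' (closedI Ccl (closed_normle _ _))) => x [] _.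
have cF : {within prod_set XX `&` [set x | `|x| <= r'], continuous Fx}.
  by apply: continuous_subspaceT; exact: Fx_cont (phi_cont der).
have [cs csK hcs] := compact_EVT_min Kne Kc cF.
rewrite inE in csK; case: csK => [[ws [Xws csE]] csr]; subst cs.
exists ws; split => // x Cx.
case: (leP `|x| r') => hx.
  by apply: hcs; rewrite inE.
have h1 : Fx x0 < Fx x.
  by apply: hr; apply: le_lt_trans hx; rewrite /r' le_max lexx.
have h2 : Fx (stack ws) <= Fx x0.
  by apply: hcs; rewrite inE; split; [exact: Cx0 | rewrite /= /r' le_max lexx orbT].
exact: le_trans h2 (ltW h1).
Qed.

Definition bf {k} (u : 'cV[R]_k) (M : 'M[R]_k) (v : 'cV[R]_k) : R := (u^T *m M *m v) 0 0.

Lemma bfDl k (u v w : 'cV[R]_k) M : bf (u + v) M w = bf u M w + bf v M w.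
Proof. by rewrite /bf linearD /= !mulmxDl mxE. Qed.
Lemma bfDr k (u v w : 'cV[R]_k) M : bf u M (v + w) = bf u M v + bf u M w.
Proof. by rewrite /bf mulmxDr mxE. Qed.
Lemma bfZl k t (u w : 'cV[R]_k) M : bf (t *: u) M w = t * bf u M w.
Proof. by rewrite /bf linearZ /= -!scalemxAl mxE. Qed.
Lemma bfZr k t (u w : 'cV[R]_k) M : bf u M (t *: w) = t * bf u M w.
Proof. by rewrite /bf -scalemxAr mxE. Qed.
Lemma bfNl k (u w : 'cV[R]_k) M : bf (- u) M w = - bf u M w.
Proof. by rewrite -(scaleN1r u) bfZl mulN1r. Qed.
Lemma bf_sym k (u w : 'cV[R]_k) M : M^T = M -> bf u M w = bf w M u.
Proof.
move=> hs; rewrite /bf; transitivity ((u^T *m M *m w)^T 0 0); first by rewrite [RHS]mxE.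
by rewrite !trmx_mul trmxK hs mulmxA.
Qed.
Lemma lcD k (c0 u v : 'cV[R]_k) : (c0^T *m (u + v)) 0 0 = (c0^T *m u) 0 0 + (c0^T *m v) 0 0.
Proof. by rewrite mulmxDr mxE. Qed.
Lemma lcZ k t (c0 u : 'cV[R]_k) : (c0^T *m (t *: u)) 0 0 = t * (c0^T *m u) 0 0.
Proof. by rewrite -scalemxAr mxE. Qed.
Lemma lcN k (c0 u : 'cV[R]_k) : (c0^T *m (- u)) 0 0 = - (c0^T *m u) 0 0.
Proof. by rewrite -(scaleN1r u) lcZ mulN1r. Qed.

Local Notation Mb nu := (@submxrow _ _ nn _ Mm nu).
Local Notation Kb nu := (@submxrow _ _ nn _ Km nu).

Definition foc (zs : prof) nu (e : 'cV[R]_(nn nu)) : R :=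
  bf e (Q nu) (zs nu) + ((c nu)^T *m e) 0 0
  + 2^-1 * \sum_(i < m) a i 0 * ((Mb nu *m e) i 0
       + (Kb nu *m e) i 0 * derive1 phi ((Km *m stack zs) i 0)).

Lemma Xconv (Cconv : convex_set_mx (prod_set XX)) (zs : prof)
  (Xzs : forall j, XX j (zs j)) nu y1 y2 t :
  XX nu y1 -> XX nu y2 -> 0 <= t <= 1 -> XX nu (t *: y1 + (1 - t) *: y2).
Proof.
move=> X1 X2 ht.
have P y : XX nu y -> prod_set XX (stack (dfw zs nu y)).
  move=> Xy; exists (dfw zs nu y); split => // j.
  by case: (dfwithP zs y j) => // j' _; exact: Xzs.
have [ws [Xws wE]] := Cconv _ _ (P _ X1) (P _ X2) t ht.
have := congr1 (fun x => @submxcol _ _ nn _ x nu) wE.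
rewrite /= submxcol_stack submxcolD !submxcolZ !submxcol_stack !dfw_in => ->.
exact: Xws.
Qed.

Lemma mxaddE p q (A1 A2 : 'M[R]_(p, q)) i j : (A1 + A2) i j = A1 i j + A2 i j.
Proof. by rewrite mxE. Qed.
Lemma mxMZ p q r t (A : 'M[R]_(p, q)) (C : 'M[R]_(q, r)) i j :
  (A *m (t *: C)) i j = t * (A *m C) i j.
Proof. by rewrite -scalemxAr mxE. Qed.

Lemma foc_ge0 (hsym : forall nu, sym_mx (Q nu)) (ha : forall i, 0 <= a i 0)
  (cvx : convex_fun phi) (der : forall x, derivable phi x 1)
  (dcont : continuous (derive1 phi))
  (Cconv : convex_set_mx (prod_set XX)) (zs : prof) (NEzs : NE zs) nu y
  (Xy : XX nu y) : 0 <= foc zs nu (y - zs nu).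
Proof.
case: NEzs => Xzs hNE.
set z := zs nu; set e := y - z.
set u := Km *m stack zs.
pose G t := bf e (Q nu) z + ((c nu)^T *m e) 0 0 + t * (2^-1 * bf e (Q nu) e)
   + 2^-1 * \sum_(i < m) a i 0 * ((Mb nu *m e) i 0 +
        (Kb nu *m e) i 0 * derive1 phi (u i 0 + t * (Kb nu *m e) i 0)).
have G0 : G 0 = foc zs nu e.
  rewrite /G /foc mul0r addr0; congr (_ + _ * _); apply: eq_bigr => i _.
  by rewrite mul0r addr0.
rewrite -G0; apply: nonneg_at0.
  rewrite /G; cD.
    cD; first (cD; cC).
    cM; [exact: cvg_id | cC].
  cM; first cC.
  apply: cont_sum => i; cM; first cC.
  cD; first cC.
  cM; first cC.
  apply: (@contcomp' _ _ _ (derive1 phi)).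
    cD; first cC.
    cM; [exact: cvg_id | cC].
  exact: dcont.
move=> t /andP[t0 t1].
have Xt : XX nu (z + t *: e).
  have -> : z + t *: e = t *: y + (1 - t) *: z.
    by rewrite /e scalerBr scalerBl scale1r addrCA.
  by apply: (Xconv Cconv zs Xzs nu y z t Xy (Xzs nu)); rewrite (ltW t0) t1.
have hN := hNE nu (z + t *: e) Xt.
rewrite !thetaE dfw_in in hN.
have hzs : bf z (Q nu) e = bf e (Q nu) z by apply: bf_sym; exact: hsym.
have hq : quad nu (z + t *: e) = quad nu z + t * (bf e (Q nu) z + ((c nu)^T *m e) 0 0)
    + t * t * (2^-1 * bf e (Q nu) e).
  change (2^-1 * bf (z + t *: e) (Q nu) (z + t *: e) + ((c nu)^T *m (z + t *: e)) 0 0 =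
     2^-1 * bf z (Q nu) z + ((c nu)^T *m z) 0 0 + t * (bf e (Q nu) z + ((c nu)^T *m e) 0 0)
    + t * t * (2^-1 * bf e (Q nu) e)).
  rewrite bfDl [bf z _ _]bfDr [bf (t *: e) _ _]bfDr !bfZl !bfZr lcD lcZ hzs; lra.
have hS : Sfun (stack (dfw zs nu (z + t *: e))) - Sfun (stack zs) <=
    t * (2^-1 * \sum_(i < m) a i 0 * ((Mb nu *m e) i 0 +
        (Kb nu *m e) i 0 * derive1 phi (u i 0 + t * (Kb nu *m e) i 0))).
  rewrite /Sfun !stack_dfwith.
  have ze : z + t *: e - zs nu = t *: e by rewrite /z addrAC subrr add0r.
  rewrite ze.
  suff key : \sum_(i < m) a i 0 * ((Mm *m stack zs + Mb nu *m (t *: e)) i 0 +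
      phi ((Km *m stack zs + Kb nu *m (t *: e)) i 0)) -
     \sum_(i < m) a i 0 * ((Mm *m stack zs) i 0 + phi ((Km *m stack zs) i 0)) <=
     t * \sum_(i < m) a i 0 * ((Mb nu *m e) i 0 +
        (Kb nu *m e) i 0 * derive1 phi (u i 0 + t * (Kb nu *m e) i 0)).
    rewrite -/u in key *; lra.
  rewrite -sumrB mulr_sumr; apply: ler_sum => i _.
  rewrite !mxaddE !mxMZ -/u.
  set hh := (Kb nu *m e) i 0; set uu := u i 0; set mb := (Mb nu *m e) i 0.
  have tg := tangent_le cvx der (uu + t * hh) uu.
  have tg' : a i 0 * (phi (uu + t * hh) - phi uu) <= a i 0 * (t * hh * derive1 phi (uu + t * hh)).
    by apply: ler_wpM2l => //; lra.
  lra.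
have : 0 <= t * G t by rewrite /G; lra.
by rewrite pmulr_rge0.
Qed.

Lemma bfNr k (u w : 'cV[R]_k) M : bf u M (- w) = - bf u M w.
Proof. by rewrite -(scaleN1r w) bfZr mulN1r. Qed.
Lemma mxNE p q (A : 'M[R]_(p, q)) i j : (- A) i j = - A i j.
Proof. by rewrite mxE. Qed.

Lemma pair_sum (xs ys : prof) nu :
  foc xs nu (ys nu - xs nu) + foc ys nu (xs nu - ys nu) =
  - bf (ys nu - xs nu) (Q nu) (ys nu - xs nu) + 2^-1 * \sum_(i < m) a i 0 *
    ((Kb nu *m (ys nu - xs nu)) i 0 *
      (derive1 phi ((Km *m stack xs) i 0) - derive1 phi ((Km *m stack ys) i 0))).
Proof.
rewrite -(opprB (ys nu)); set e := ys nu - xs nu.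
have be : bf e (Q nu) e = bf e (Q nu) (ys nu) - bf e (Q nu) (xs nu).
  by rewrite {3}/e bfDr bfNr.
rewrite /foc be bfNl lcN.
have -> : \sum_(i < m) a i 0 * ((Mb nu *m - e) i 0 +
      (Kb nu *m - e) i 0 * derive1 phi ((Km *m stack ys) i 0)) =
    - \sum_(i < m) a i 0 * ((Mb nu *m e) i 0 +
      (Kb nu *m e) i 0 * derive1 phi ((Km *m stack ys) i 0)).
  rewrite -sumrN; apply: eq_bigr => i _; rewrite !mulmxN !mxNE; ring.
set S1 := \sum_(i < m) _ * (_ + _ * derive1 phi ((Km *m stack xs) i 0)).
set S2 := \sum_(i < m) _ * (_ + _ * derive1 phi ((Km *m stack ys) i 0)).
have -> : \sum_(i < m) a i 0 * ((Kb nu *m e) i 0 *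
      (derive1 phi ((Km *m stack xs) i 0) - derive1 phi ((Km *m stack ys) i 0))) = S1 - S2.
  rewrite /S1 /S2 -sumrB; apply: eq_bigr => i _; ring.
lra.
Qed.

Lemma dmono (cvx : convex_fun phi) (der : forall x, derivable phi x 1) p q :
  (derive1 phi p - derive1 phi q) * (q - p) <= 0.
Proof. have := tangent_le cvx der p q; have := tangent_le cvx der q p; nra. Qed.

Lemma bf_ge0 (hQ : forall nu, posdef_mx (Q nu)) nu (v : 'cV[R]_(nn nu)) : 0 <= bf v (Q nu) v.
Proof.
have [->|nz] := eqVneq v 0; first by rewrite /bf mulmx0 mxE.
exact/ltW/hQ.
Qed.

Lemma uniq_NE (hQ : forall nu, sym_mx (Q nu) /\ posdef_mx (Q nu))
  (ha : forall i, 0 <= a i 0)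
  (cvx : convex_fun phi) (der : forall x, derivable phi x 1)
  (dcont : continuous (derive1 phi))
  (Cconv : convex_set_mx (prod_set XX)) (xs ys : prof) :
  NE xs -> NE ys -> forall nu, ys nu = xs nu.
Proof.
move=> hx hy.
have hsym nu : sym_mx (Q nu) by case: (hQ nu).
have hpd nu : posdef_mx (Q nu) by case: (hQ nu).
have F nu := addr_ge0 (foc_ge0 hsym ha cvx der dcont Cconv xs hx nu (ys nu) (hy.1 nu))
                      (foc_ge0 hsym ha cvx der dcont Cconv ys hy nu (xs nu) (hx.1 nu)).
pose d i := derive1 phi ((Km *m stack xs) i 0) - derive1 phi ((Km *m stack ys) i 0).
have S : 0 <= \sum_nu (- bf (ys nu - xs nu) (Q nu) (ys nu - xs nu) + 2^-1 *
    \sum_(i < m) a i 0 * ((Kb nu *m (ys nu - xs nu)) i 0 * d i)).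
  by apply: sumr_ge0 => nu _; rewrite -pair_sum; exact: F.
have KE : Km *m stack ys - Km *m stack xs = \sum_nu Kb nu *m (ys nu - xs nu).
  by rewrite !stack_block -sumrB; apply: eq_bigr => nu _; rewrite mulmxBr.
have T : \sum_nu 2^-1 * \sum_(i < m) a i 0 * ((Kb nu *m (ys nu - xs nu)) i 0 * d i) <= 0.
  rewrite -mulr_sumr exchange_big /=.
  have -> : \sum_(i < m) \sum_nu a i 0 * ((Kb nu *m (ys nu - xs nu)) i 0 * d i) =
      \sum_(i < m) a i 0 * (((Km *m stack ys) i 0 - (Km *m stack xs) i 0) * d i).
    apply: eq_bigr => i _.
    have -> : (Km *m stack ys) i 0 - (Km *m stack xs) i 0 =
        \sum_nu (Kb nu *m (ys nu - xs nu)) i 0.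
      by rewrite -summxE -KE mxaddE mxNE.
    rewrite mulr_suml mulr_sumr; apply: eq_bigr => nu _; ring.
  rewrite pmulr_rle0 ?invr_gt0 ?ltr0n //.
  apply: sumr_le0 => i _; apply: mulr_ge0_le0 => //.
  rewrite mulrC; exact: dmono.
have Sb : \sum_nu bf (ys nu - xs nu) (Q nu) (ys nu - xs nu) <= 0.
  move: S; rewrite big_split /= sumrN; lra.
move=> nu; apply/eqP; rewrite -subr_eq0; apply/negPn/negP => nz.
have h1 := hpd nu _ nz.
have h2 : 0 <= \sum_(j < N | j != nu) bf (ys j - xs j) (Q j) (ys j - xs j).
  by apply: sumr_ge0 => j _; exact: bf_ge0.
move: Sb; rewrite (bigD1 nu) //=.
rewrite /bf in h2 *; lra.
Qed.

End Main.

Theorem mainTheorem6 (R : realType) (N m : nat) (nn : 'I_N -> nat)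
  (Q : forall nu, 'M[R]_(nn nu)) (c : forall nu, 'cV[R]_(nn nu))
  (X : forall nu, set 'cV[R]_(nn nu))
  (a : 'cV[R]_m) (Qy : 'M[R]_m) (B L : 'M[R]_(\sum_(nu < N) nn nu, m))
  (eps : R) (phi : R -> R) :
  (0 < N)%N -> (0 < m)%N ->
  (forall nu, sym_mx (Q nu) /\ posdef_mx (Q nu)) ->
  (forall nu, X nu !=set0) ->
  convex_set_mx (prod_set X) -> closed (prod_set X) ->
  (forall i, 0 <= a i 0) ->
  is_diag_mx Qy -> posdef_mx Qy ->
  0 < eps -> convex_fun phi -> smooth_fun phi ->
  exists xs : forall nu, 'cV[R]_(nn nu),
    nash_eq Q c X a Qy B L phi xs /\
    forall ys : forall nu, 'cV[R]_(nn nu),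
      nash_eq Q c X a Qy B L phi ys -> forall nu, ys nu = xs nu.
Proof.
move=> N0 m0 hQ hX Cconv Ccl ha _ _ _ cvx sm.
have der : forall x, derivable phi x 1.
  by move=> x; have := sm 0%N x; rewrite derive1n0.
have dcont : continuous (derive1 phi).
  move=> x; apply: differentiable_continuous; apply/derivable1_diffP.
  by have := sm 1%N x; rewrite derive1n1.
have hpd nu : posdef_mx (Q nu) by case: (hQ nu).
have [xs [Xxs hmin]] := @exists_min R N m nn Q c X a Qy B L phi hpd ha cvx der hX Ccl.
exists xs; split.
  exact: (@min_is_nash R N m nn Q c X a Qy B L phi xs Xxs hmin).
move=> ys hy nu.
exact: (@uniq_NE R N m nn Q c X a Qy B L phi hQ ha cvx der dcont Cconv xs ys
   (@min_is_nash R N m nn Q c X a Qy B L phi xs Xxs hmin) hy nu).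
Qed.
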